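(* Let $X$ and $Y$ be locally compact Hausdorff spaces and $\pi:X\to Y$ a proper map (i.e. $\pi^{-1}(K)$ is compact for every compact $K\subseteq Y$). For an object $Y+_fZ$ of $\mathrm{Comp}(Y)$ define $f^\ast:\mathrm{Closed}(X)\to\mathrm{Closed}(Z)$ by $f^\ast(A)=\mathrm{Cl}_Z\big(f(\mathrm{Cl}_Y(\pi(A)))\big)$. Then the assignment $\Pi(Y+_fZ)=X+_{f^\ast}Z$ and, for a morphism $\mathrm{id}+\varpi:Y+_fZ\to Y+_gW$, $\Pi(\mathrm{id}+\varpi)=\mathrm{id}+\varpi:X+_{f^\ast}Z\to X+_{g^\ast}W$, is a functor $\Pi:\mathrm{Comp}(Y)\to\mathrm{Comp}(X)$.
   Context: $\mathrm{Closed}(A)$ is the set of closed subsets of a space $A$; $f:\mathrm{Closed}(A)\to\mathrm{Closed}(B)$ is admissible if $f(\emptyset)=\emptyset$ and $f$ preserves finite unions; $A+_fB$ is $A\sqcup B$ with closed sets the $D$ such that $D\cap A$ is closed in $A$, $D\cap B$ closed in $B$ and $f(D\cap A)\subseteq D$. For a locally compact Hausdorff space $X$, $\mathrm{Comp}(X)$ is the category whose objects are compact spaces $X+_fW$ with $W$ compact Hausdorff and $f$ admissible, and whose morphisms are continuous maps restricting to the identity on $X$ (hence of the form $\mathrm{id}+\varpi$, with $\varpi$ a map between the remainders). *)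

(* Defs.v *)
From HB Require Import structures.
From mathcomp Require Import all_boot all_classical all_reals all_analysis.

Set Implicit Arguments.
Unset Strict Implicit.
Unset Printing Implicit Defensive.

Local Open Scope classical_set_scope.

(** A map Closed(A) -> Closed(B) is
    represented by a function [set A -> set B]; only its values on closed
    sets matter, and it is required to send closed sets to closed sets. *)
Definition admissible (A B : topologicalType) (f : set A -> set B) : Prop :=
  [/\ (forall C, closed C -> closed (f C)),
      f set0 = set0 &
      (forall C D, closed C -> closed D -> f (C `|` D) = f C `|` f D)].

Definition adj_closed (A B : topologicalType) (f : set A -> set B)
    (D : set (A + B)%type) : Prop :=
  [/\ closed (inl @^-1` D : set A),
      closed (inr @^-1` D : set B) &
      f (inl @^-1` D) `<=` inr @^-1` D].

(** When f is
    admissible the [adj_closed] sets already form the closed sets of a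
    topology, so this is exactly the topology of the paper. *)
Definition adj (A B : topologicalType) (f : set A -> set B) : Type :=
  (A + B)%type.

HB.instance Definition _ (A B : topologicalType) (f : set A -> set B) :=
  Choice.on (adj f).

HB.instance Definition _ (A B : topologicalType) (f : set A -> set B) :=
  @isSubBaseTopological.Build (adj f) (set (A + B)%type)
    [set U | adj_closed f (~` U)] id.

Definition idsum (A B C : Type) (w : B -> C) (s : (A + B)%type) : (A + C)%type :=
  match s with inl a => inl a | inr b => inr (w b) end.

Definition proper_map (X Y : topologicalType) (p : X -> Y) : Prop :=
  continuous p /\ forall K : set Y, compact K -> compact (p @^-1` K).

Definition fstar (X Y Z : topologicalType) (p : X -> Y) (f : set Y -> set Z)
    (A : set X) : set Z :=
  closure (f (closure (p @` A))).

Definition comp_object (Y Z : topologicalType) (f : set Y -> set Z) : Prop :=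
  [/\ compact [set: Z], hausdorff_space Z, admissible f &
      compact [set: adj f]].

Definition comp_morphism (Y Z W : topologicalType) (f : set Y -> set Z)
    (g : set Y -> set W) (w : Z -> W) : Prop :=
  continuous (idsum w : adj f -> adj g).

(* Main.v *)
Require Import Defs.
From HB Require Import structures.
From mathcomp Require Import all_boot all_classical all_reals all_analysis.
Local Open Scope classical_set_scope.


Section Adj.
Context (A B : topologicalType) (f : set A -> set B) (adm : admissible f).

Lemma adm_mono (C D : set A) : closed C -> closed D -> C `<=` D -> f C `<=` f D.
Proof.
case: adm => _ _ fU cC cD CD.
have -> : D = C `|` D by rewrite setUidr.
by rewrite fU //; apply: subsetUl.
Qed.

Lemma adj_closed0 : adj_closed f set0.
Proof.
case: adm => _ f0 _; split => //=; try exact: closed0.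
by rewrite preimage_set0 f0.
Qed.

Lemma adj_closedU (D1 D2 : set (A + B)%type) :
  adj_closed f D1 -> adj_closed f D2 -> adj_closed f (D1 `|` D2).
Proof.
case: adm => _ _ fU [c1 d1 s1] [c2 d2 s2]; split.
- exact: closedU.
- exact: closedU.
- rewrite preimage_setU fU // preimage_setU; exact: setUSS.
Qed.

Lemma adj_closed_bigcap (I : Type) (P : set I) (F : I -> set (A + B)%type) :
  (forall i, P i -> adj_closed f (F i)) -> adj_closed f (\bigcap_(i in P) F i).
Proof.
move=> H; split.
- rewrite preimage_bigcap; apply: closed_bigI => i Pi; by case: (H i Pi).
- rewrite preimage_bigcap; apply: closed_bigI => i Pi; by case: (H i Pi).
- move=> b fb i Pi; case: (H i Pi) => c1 c2 s; apply: s.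
  apply: (@adm_mono _ _ _ c1 _ _ fb).
  + rewrite preimage_bigcap; apply: closed_bigI => j Pj; by case: (H j Pj).
  + by move=> a /(_ i Pi).
Qed.

Lemma adj_closed_seq (s : seq (set (A + B)%type)) :
  (forall i, i \in s -> adj_closed f (~` i)) ->
  adj_closed f (~` [set x | forall i, i \in s -> i x]).
Proof.
elim: s => [|a s IH] H.
  have -> : ~` [set x : (A+B)%type | forall i : set (A+B)%type, i \in [::] -> i x] = set0.
    by apply/seteqP; split => x //=; apply; move=> i; rewrite in_nil.
  exact: adj_closed0.
have -> : ~` [set x : (A+B)%type | forall i : set (A+B)%type, i \in a :: s -> i x] =
   ~` a `|` ~` [set x | forall i : set (A+B)%type, i \in s -> i x].
  apply/seteqP; split => x /=.
  - move=> nH; apply/not_andP => -[ax sx]; apply: nH => i.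
    by rewrite in_cons => /orP[/eqP->|/sx].
  - case=> nx Hx; apply: nx.
    + by apply: Hx; rewrite mem_head.
    + by move=> i si; apply: Hx; rewrite in_cons si orbT.
apply: adj_closedU; first by apply: H; rewrite mem_head.
by apply: IH => i si; apply: H; rewrite in_cons si orbT.
Qed.
End Adj.
Section Adj2.
Context (A B : topologicalType) (f : set A -> set B).

Lemma adj_closed_closed (D : set (A + B)%type) :
  adj_closed f D -> closed (D : set (adj f)).
Proof.
move=> H; rewrite -openC; exists [set ~` D]; last by rewrite bigcup_set1.
move=> _ ->; have := @finI_from1 _ _ [set U : set (A+B)%type | adj_closed f (~` U)] id (~` D).
by apply; rewrite /= setCK.
Qed.

Lemma closed_adj_closed (D : set (adj f)) :
  admissible f -> closed D -> adj_closed f D.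
Proof.
move=> adm; rewrite -openC => -[D' sub eq].
have -> : D = \bigcap_(i in D') ~` i by rewrite -setC_bigcup; move: eq => /(congr1 setC); rewrite setCK => <-.
apply: adj_closed_bigcap => // i /sub [S SS <-].
have := @adj_closed_seq A B f adm (finmap.enum_fset S).
apply => j jS; have := SS j jS; rewrite inE /=; exact.
Qed.
End Adj2.

Lemma fstar_adm (X Y Z : topologicalType) (p : X -> Y) (f : set Y -> set Z) :
  admissible f -> admissible (fstar p f).
Proof.
move=> adm; have [fc f0 fU] := adm; split.
- move=> C _; exact: closed_closure.
- by rewrite /fstar image_set0 closure0 f0 closure0.
- move=> C D _ _; rewrite /fstar image_setU closureU fU ?closureU //;
  exact: closed_closure.
Qed.

Lemma morph (X Y Z W : topologicalType) (p : X -> Y) (f : set Y -> set Z)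
  (g : set Y -> set W) (w : Z -> W) :
  admissible f -> admissible g -> continuous (idsum w : adj f -> adj g) ->
  continuous (idsum w : adj (fstar p f) -> adj (fstar p g)).
Proof.
move=> af ag cw; apply/continuousP => U oU.
rewrite -closedC preimage_setC.
have : adj_closed (fstar p g) (~` U).
  apply: closed_adj_closed; first exact: fstar_adm.
  exact: open_closedC.
set D := ~` U => -[cA cB sub].
set C := closure (p @` (inl @^-1` D)).
pose E : set (Y + W)%type := fun s => match s with inl y => C y | inr b => D (inr b) end.
have aE : adj_closed g E.
  split => //; first exact: closed_closure.
  apply: subset_trans sub; exact: subset_closure.
have cE : closed (E : set (adj g)) by exact: adj_closed_closed.
have cP : closed ((idsum w : adj f -> adj g) @^-1` E : set (adj f)).
  rewrite -openC preimage_setC; move/continuousP: cw; apply.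
  by rewrite openC.
have [_ cP2 subP] := @closed_adj_closed _ _ _ _ af cP.
apply: adj_closed_closed; split => //.
have -> : inr @^-1` ((idsum w : adj (fstar p f) -> adj (fstar p g)) @^-1` D)
   = inr @^-1` ((idsum w : adj f -> adj g) @^-1` E) by [].
apply: subset_trans (closureS subP) _; by move/closure_id: cP2 => <-.
Qed.

Lemma inl_compact (Y Z : topologicalType) (f : set Y -> set Z) (C : set Y) :
  admissible f -> compact [set: adj f] -> closed C -> f C = set0 -> compact C.
Proof.
move=> adm cT cC fC0.
have [fc f0 fU] := adm.
pose E : set (adj f) := fun s => match s with inl y => C y | inr _ => False end.
have aE : adj_closed f E.
  split => //; first exact: closed0.
  by rewrite /= fC0.
have cE : compact E.
  apply: subclosed_compact cT _ => //; exact: adj_closed_closed.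
move=> F PF FC.
have PG : ProperFilter ((inl : Y -> adj f) @ F) by exact: fmap_proper_filter.
have [q [Eq clq]] := cE _ PG FC.
case: q Eq clq => [y|b] //= Cy clq.
exists y; split => //.
rewrite clusterE => B FB.
pose E' : set (adj f) := fun s => match s with
   inl y => closure B y | inr b => f (closure B) b end.
have aE' : adj_closed f E'.
  split => //; [exact: closed_closure | apply: fc; exact: closed_closure].
have cE' : closed E' by exact: adj_closed_closed.
have GE' : ((inl : Y -> adj f) @ F) E'.
  rewrite fmapE; apply: filterS FB; exact: subset_closure.
move: clq; rewrite clusterE => /(_ E' GE').
by move/closure_id: cE' => <-.
Qed.

Lemma closure_adj (A B : topologicalType) (f : set A -> set B) (S : set (adj f)) :
  admissible f -> adj_closed f (closure S).
Proof. move=> adm; apply: closed_adj_closed => //; exact: closed_closure. Qed.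

Lemma compact_pullback (X Y Z : topologicalType) (p : X -> Y) (f : set Y -> set Z) :
  (forall K : set Y, compact K -> compact (p @^-1` K)) ->
  admissible f -> compact [set: Z] -> compact [set: adj f] ->
  compact [set: adj (fstar p f)].
Proof.
move=> pp adm cZ cT.
have adm' := @fstar_adm _ _ _ p _ adm.
move=> F PF _.
have clA : forall A : set (adj (fstar p f)), adj_closed (fstar p f) (closure A) by move=> A; exact: closure_adj.
have [caseA|caseB] := pselect (forall A, F A -> exists z, closure A (inr z)).
- pose G : set_system Z := fun B => exists2 A, F A & inr @^-1` (closure A) `<=` B.
  have PG : ProperFilter G.
    apply: Build_ProperFilter_ex.
      by move=> P [A FA sub]; have [z cz] := caseA A FA; exists z; apply: sub.
    split.
    + by exists setT => //; exact: filterT.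
    + move=> P Q [A1 F1 s1] [A2 F2 s2]; exists (A1 `&` A2); first exact: filterI.
      move=> z /closureI [h1 h2]; split; [exact: s1 | exact: s2].
    + by move=> P Q PQ [A FA s]; exists A => //; apply: subset_trans PQ.
  have [z [_ clz]] := cZ G PG (ltac:(by exists setT => //; exact: filterT)).
  exists (inr z); split => //.
  rewrite clusterE => A FA.
  move: clz; rewrite clusterE => /(_ (inr @^-1` closure A)).
  have [_ c2 _] := clA A.
  move/closure_id: c2 => <-; apply; by exists A.
- move/existsNP: caseB => [A0 /not_implyP [FA0 nz]].
  set K := inl @^-1` (closure A0) : set X.
  have [cK _ sK] := clA A0.
  set C := closure (p @` K).
  have fC0 : f C = set0.
    apply/seteqP; split => // z fz; apply: nz; exists z.
    apply: sK; exact: subset_closure.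
  have cC : compact C.
    apply: inl_compact adm cT _ fC0; exact: closed_closure.
  have cKc : compact K.
    apply: subclosed_compact cK (pp _ cC) _.
    move=> x Kx; apply: subset_closure; by exists x.
  pose H : set_system X := fun B => exists2 A, F A & inl @^-1` (A `&` A0) `<=` B.
  have PH : ProperFilter H.
    apply: Build_ProperFilter_ex.
      move=> P [A FA sub].
      have [s [As A0s]] := filter_ex (filterI FA FA0).
      case: s As A0s => [x|b] As A0s.
        by exists x; apply: sub.
      exfalso; apply: nz; exists b; exact: subset_closure.
    split.
    + by exists setT => //; exact: filterT.
    + move=> P Q [A1 F1 s1] [A2 F2 s2]; exists (A1 `&` A2); first exact: filterI.
      move=> x [[h1 h2] h0]; split; [exact: s1 | exact: s2].
    + by move=> P Q PQ [A FA s]; exists A => //; apply: subset_trans PQ.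
  have HK : H K.
    exists A0 => // x [_ h]; exact: subset_closure.
  have [x [Kx clx]] := cKc H PH HK.
  exists (inl x); split => //.
  rewrite clusterE => A FA.
  move: clx; rewrite clusterE => /(_ (inl @^-1` (A `&` A0))).
  have [c1 _ _] := clA A.
  have HA : H (inl @^-1` (A `&` A0)) by exists A.
  move=> /(_ HA) cl.
  have : closure (inl @^-1` (closure A)) x.
    by apply: (closureS _ cl) => y [Ay _]; exact: subset_closure.
  by move/closure_id: c1 => <-.
Qed.

Theorem mainTheorem13 (X Y : topologicalType)
  (hX : hausdorff_space X) (lcX : locally_compact [set: X])
  (hY : hausdorff_space Y) (lcY : locally_compact [set: Y])
  (pi : X -> Y) (ppi : proper_map pi) :
  (* Pi sends objects of Comp(Y) to objects of Comp(X) *)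
  (forall (Z : topologicalType) (f : set Y -> set Z),
     comp_object f -> comp_object (fstar pi f)) /\
  (* Pi sends morphisms id + w to morphisms id + w *)
  (forall (Z W : topologicalType) (f : set Y -> set Z) (g : set Y -> set W)
          (w : Z -> W),
     comp_object f -> comp_object g -> comp_morphism f g w ->
     comp_morphism (fstar pi f) (fstar pi g) w) /\
  (* Pi preserves identities *)
  (forall (Z : topologicalType), @idsum X Z Z id = id) /\
  (* Pi preserves composition *)
  (forall (Z W V : topologicalType) (w : Z -> W) (w' : W -> V),
     @idsum X W V w' \o @idsum X Z W w = @idsum X Z V (w' \o w)).
Proof.
case: ppi => _ pp.
split; last split; last split.
- move=> Z f [cZ hZ adm cT]; split => //.
  + exact: fstar_adm.
  + exact: compact_pullback.
- move=> Z W f g w [_ _ af _] [_ _ ag _] cw; exact: morph.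
- by move=> Z; apply: funext => -[].
- by move=> Z W V w w'; apply: funext => -[].
Qed.
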